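(* For any graph $\Gamma$, the polygraph monoid $P(\Gamma)=IH^0(M(\Gamma))$ is strongly $E^*$-unitary.
   Context: A graph $\Gamma=(V,E)$ has vertex set $V$ and irreflexive symmetric edge relation $E$. The graph monoid $M(\Gamma)$ is presented by $\langle x_v\ (v\in V)\mid x_ux_v=x_vx_u \text{ for } (u,v)\in E\rangle$. For a right cancellative monoid $D$ and $a\in D$, $\rho_a:D\to D$, $x\mapsto xa$, is a partial bijection of $D$; $IH(D)$ is the inverse submonoid of the symmetric inverse monoid on $D$ generated by all $\rho_a$, and $IH^0(D)=IH(D)\cup\{\emptyset\}$ with the empty map as zero. An inverse monoid $S$ with zero is strongly $E^*$-unitary if there is a group $G$ and a function $\theta:S\to G^0$ ($G$ with a zero adjoined) such that $a\theta=0$ iff $a=0$, $a\theta=1$ iff $a$ is a nonzero idempotent, and $(ab)\theta=(a\theta)(b\theta)$ whenever $ab\neq 0$. *)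

(* Defs.v *)
From Stdlib Require Import List Relations.
Import ListNotations.
Set Implicit Arguments.

Section GraphMonoid.
Variables (V : Type) (E : V -> V -> Prop).

Inductive gstep : list V -> list V -> Prop :=
| gswap (u w : list V) (a b : V) :
    E a b -> gstep (u ++ a :: b :: w) (u ++ b :: a :: w).

Definition gequiv : list V -> list V -> Prop := clos_refl_sym_trans _ gstep.

Definition GM : Type := { P : list V -> Prop | exists w, P = gequiv w }.

Definition rho (a : GM) : GM -> GM -> Prop :=
  fun x y => exists u v, proj1_sig x = gequiv u /\ proj1_sig a = gequiv v /\
                         proj1_sig y = gequiv (u ++ v).
End GraphMonoid.

(** * Partial maps on a type, as relations; composition is left to right:
      x (f g) = (x f) g. *)
Definition prel (X : Type) := X -> X -> Prop.
Definition pcomp X (f g : prel X) : prel X := fun x z => exists y, f x y /\ g y z.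
Definition pinv X (f : prel X) : prel X := fun x y => f y x.
Definition pid X : prel X := fun x y => x = y.
Definition pempty X (f : prel X) : Prop := forall x y, ~ f x y.
Definition pidem X (f : prel X) : Prop := forall x y, pcomp f f x y <-> f x y.

Inductive inIH (V : Type) (E : V -> V -> Prop) : prel (GM E) -> Prop :=
| ih_gen (a : GM E) : inIH (rho a)
| ih_id : inIH (@pid (GM E))
| ih_inv f : inIH f -> inIH (pinv f)
| ih_comp f g : inIH f -> inIH g -> inIH (pcomp f g).

Definition inIH0 (V : Type) (E : V -> V -> Prop) (f : prel (GM E)) : Prop :=
  @inIH V E f \/ pempty f.

Record group_str (G : Type) := {
  gmul : G -> G -> G;
  gone : G;
  ginv : G -> G;
  gmulA : forall x y z, gmul x (gmul y z) = gmul (gmul x y) z;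
  gmul1 : forall x, gmul gone x = x;
  gmulV : forall x, gmul (ginv x) x = gone
}.

(** multiplication in G^0 = G with a zero adjoined (None = 0) *)
Definition omul G (g : group_str G) (x y : option G) : option G :=
  match x, y with Some a, Some b => Some (gmul g a b) | _, _ => None end.

(** An inverse monoid with zero S (given as a set of partial maps on X,
    zero = empty map, product = composition) is strongly E*-unitary. *)
Definition strongly_Estar_unitary X (S : prel X -> Prop) : Prop :=
  exists (G : Type) (g : group_str G) (theta : prel X -> option G),
    (forall a, S a -> (theta a = None <-> pempty a)) /\
    (forall a, S a -> (theta a = Some (gone g) <-> (~ pempty a /\ pidem a))) /\
    (forall a b, S a -> S b -> ~ pempty (pcomp a b) ->
       theta (pcomp a b) = omul g (theta a) (theta b)).

(* Main.v *)
Require Import Defs.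
From Stdlib Require Import List Relations Classical ClassicalEpsilon FunctionalExtensionality ProofIrrelevance PropExtensionality.
Import ListNotations.
Set Implicit Arguments.

Definition dec (P : Prop) : {P} + {~ P} := excluded_middle_informative P.

Record perm (X : Type) := Perm {
  pf : X -> X; pg : X -> X;
  pfg : forall x, pf (pg x) = x; pgf : forall x, pg (pf x) = x }.
Arguments Perm {X}. Arguments pf {X}. Arguments pg {X}.
Arguments pfg {X}. Arguments pgf {X}.

Lemma perm_ext X (p q : perm X) : (forall x, pf p x = pf q x) -> p = q.
Proof.
  destruct p as [f g fg gf], q as [f' g' fg' gf']; simpl; intros H.
  assert (f = f') by (apply functional_extensionality; auto). subst f'.
  assert (g = g').
  { apply functional_extensionality; intro x. rewrite <- (fg' x) at 1. rewrite gf. reflexivity. }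
  subst g'. f_equal; apply proof_irrelevance.
Qed.

Definition pmul X (p q : perm X) : perm X.
  refine (Perm (fun x => pf p (pf q x)) (fun x => pg q (pg p x)) _ _); intro x.
  - rewrite !pfg. reflexivity.
  - rewrite !pgf. reflexivity.
Defined.

Definition pone X : perm X := Perm (fun x => x) (fun x => x) (fun x => eq_refl) (fun x => eq_refl).

Definition pinvp X (p : perm X) : perm X := Perm (pg p) (pf p) (pgf p) (pfg p).
Arguments pmul {X}. Arguments pinvp {X}.

Definition permG X : group_str (perm X).
  refine (@Build_group_str (perm X) (@pmul X) (pone X) (@pinvp X) _ _ _);
  intros; apply perm_ext; intros; simpl; try reflexivity.
  apply pgf.
Defined.

Lemma pmul_cancel X (a b c : perm X) : pmul a b = pmul a c -> b = c.
Proof.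
  intro H. apply perm_ext. intro z.
  assert (H1 := f_equal (fun p => pf p z) H). simpl in H1.
  apply (f_equal (pg a)) in H1. rewrite !pgf in H1. exact H1.
Qed.

Lemma sig_ext A (P : A -> Prop) (x y : sig P) : proj1_sig x = proj1_sig y -> x = y.
Proof. destruct x, y; simpl; intros ->; f_equal; apply proof_irrelevance. Qed.

Fixpoint reduced V (w : list (bool * V)) : Prop :=
  match w with
  | (s, c) :: (((s', c') :: _) as w') => ~ (c' = c /\ s' = negb s) /\ reduced w'
  | _ => True
  end.

Definition push V (s : bool) (c : V) (w : list (bool * V)) : list (bool * V) :=
  match w with
  | (s', c') :: w' => if dec (c' = c /\ s' = negb s) then w' else (s, c) :: w
  | [] => [(s, c)]
  end.

Lemma push_red V s (c : V) w : reduced w -> reduced (push s c w).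
Proof.
  destruct w as [|[s' c'] w]; simpl; [trivial|].
  intro H. destruct (dec (c' = c /\ s' = negb s)) as [h|n].
  - destruct w as [|[s2 c2] w]; simpl in *; tauto.
  - simpl. split; auto.
Qed.

Lemma push_inv V s (c : V) w : reduced w -> push (negb s) c (push s c w) = w.
Proof.
  destruct w as [|[s' c'] w]; simpl.
  - intros _. destruct (dec (c = c /\ s = negb (negb s))) as [_|n]; [reflexivity|].
    exfalso; apply n; split; [reflexivity| now destruct s].
  - intro H. destruct (dec (c' = c /\ s' = negb s)) as [[-> ->]|n].
    + destruct w as [|[s2 c2] w]; simpl; [reflexivity|].
      destruct (dec (c2 = c /\ s2 = negb (negb s))) as [h|n']; [|reflexivity].
      simpl in H. tauto.
    + simpl. destruct (dec (c = c /\ s = negb (negb s))) as [_|n']; [reflexivity|].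
      exfalso; apply n'; split; [reflexivity| now destruct s].
Qed.

Definition Om V := (V * V * { w : list (bool * V) | reduced w })%type.

Definition actw V (E : V -> V -> Prop) (s : bool) (c : V) (o : Om V) : Om V :=
  match o with
  | (p, q, w) =>
    (p, q, if dec (~ E p q /\ (c = p \/ c = q))
           then exist _ (push s c (proj1_sig w)) (@push_red V s c _ (proj2_sig w))
           else w)
  end.

Lemma actw_inv V E s (c : V) o : actw E (negb s) c (actw E s c o) = o.
Proof.
  destruct o as [[p q] [w Hw]]; unfold actw.
  destruct (dec (~ E p q /\ (c = p \/ c = q))) as [h|h];
  destruct (dec (~ E p q /\ (c = p \/ c = q))) as [h'|h']; try tauto.
  - f_equal. apply sig_ext. simpl. apply push_inv. exact Hw.
Qed.

Definition letter V (E : V -> V -> Prop) (c : V) : perm (Om V) :=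
  Perm (actw E true c) (actw E false c) (actw_inv E false c) (actw_inv E true c).

Definition phiw V (E : V -> V -> Prop) (u : list V) : perm (Om V) :=
  fold_right (fun c acc => pmul (letter E c) acc) (pone _) u.

Lemma phiw_app V E (u v : list V) : phiw E (u ++ v) = pmul (phiw E u) (phiw E v).
Proof.
  induction u as [|a u IH]; simpl.
  - apply perm_ext; reflexivity.
  - rewrite IH. apply perm_ext; reflexivity.
Qed.

Lemma actw_comm V (E : V -> V -> Prop) (Esym : forall u v, E u v -> E v u)
  (Eirr : forall v, ~ E v v) a b o :
  E a b -> actw E true a (actw E true b o) = actw E true b (actw E true a o).
Proof.
  intro Hab. destruct o as [[p q] w]; unfold actw.
  destruct (dec (~ E p q /\ (b = p \/ b = q))) as [hb|hb];
  destruct (dec (~ E p q /\ (a = p \/ a = q))) as [ha|ha]; try reflexivity.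
  exfalso. destruct hb as [n [-> | ->]]; destruct ha as [_ [-> | ->]];
    first [exact (Eirr _ Hab) | exact (n Hab) | exact (n (Esym _ _ Hab))].
Qed.

Lemma gequiv_cons V (E : V -> V -> Prop) a u w : gequiv E u w -> gequiv E (a :: u) (a :: w).
Proof.
  induction 1.
  - apply rst_step. destruct H. exact (@gswap V E (a :: u) w a0 b H).
  - apply rst_refl.
  - apply rst_sym; auto.
  - eapply rst_trans; eauto.
Qed.

Lemma gequiv_move V (E : V -> V -> Prop) (Esym : forall u v, E u v -> E v u) a w1 w2 :
  (forall c, In c w1 -> E a c) -> gequiv E (w1 ++ a :: w2) (a :: w1 ++ w2).
Proof.
  induction w1 as [|c w1 IH]; intro H; simpl.
  - apply rst_refl.
  - eapply rst_trans.
    + apply gequiv_cons. apply IH. intros; apply H; simpl; auto.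
    + apply rst_step. exact (@gswap V E [] (w1 ++ w2) c a (Esym _ _ (H c (or_introl eq_refl)))).
Qed.

Lemma phiw_resp V (E : V -> V -> Prop) (Esym : forall u v, E u v -> E v u)
  (Eirr : forall v, ~ E v v) u w : gequiv E u w -> phiw E u = phiw E w.
Proof.
  induction 1.
  - destruct H as [u w a b Hab]. rewrite !phiw_app. f_equal.
    apply perm_ext; intro o; simpl. apply actw_comm; auto.
  - reflexivity.
  - auto.
  - congruence.
Qed.

Definition proj V (p q : V) (u : list V) : list V :=
  filter (fun c => if dec (c = p \/ c = q) then true else false) u.

Lemma proj_cons V (p q a : V) l :
  proj p q (a :: l) = if dec (a = p \/ a = q) then a :: proj p q l else proj p q l.
Proof. unfold proj; simpl; destruct dec; reflexivity. Qed.

Lemma proj_app V (p q : V) l1 l2 : proj p q (l1 ++ l2) = proj p q l1 ++ proj p q l2.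
Proof. unfold proj; apply filter_app. Qed.

Lemma proj_In V (p q x : V) l : In x (proj p q l) <-> In x l /\ (x = p \/ x = q).
Proof.
  unfold proj; rewrite filter_In. destruct dec; intuition discriminate.
Qed.

Lemma proj_nil V (p q : V) l : (forall c, In c l -> ~ (c = p \/ c = q)) -> proj p q l = [].
Proof.
  induction l as [|a l IH]; intro H; [reflexivity|].
  rewrite proj_cons. destruct dec as [h|h].
  - exfalso; apply (H a); simpl; auto.
  - apply IH; intros; apply H; simpl; auto.
Qed.

Lemma reduced_pos V (l : list V) : reduced (map (pair true) l).
Proof.
  induction l as [|a l IH]; simpl; [trivial|].
  destruct l as [|b l]; simpl; [trivial|].
  split; [intros [_ H]; discriminate H| exact IH].
Qed.

Lemma push_pos V (c : V) l : push true c (map (pair true) l) = (true, c) :: map (pair true) l.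
Proof.
  destruct l as [|b l]; simpl; [reflexivity|].
  destruct dec as [[_ H]|_]; [discriminate H|reflexivity].
Qed.

Lemma eval_phiw V (E : V -> V -> Prop) p q u : ~ E p q ->
  pf (phiw E u) (p, q, exist _ [] I) =
  (p, q, exist _ (map (pair true) (proj p q u)) (reduced_pos (proj p q u))).
Proof.
  intro Hpq. induction u as [|c u IH]; simpl.
  - f_equal. apply sig_ext. reflexivity.
  - rewrite IH. unfold actw.
    destruct (dec (c = p \/ c = q)) as [h|h];
    destruct (dec (~ E p q /\ (c = p \/ c = q))) as [h'|h']; try tauto.
    all: f_equal; apply sig_ext; simpl; try apply push_pos; reflexivity.
Qed.

Lemma phiw_proj V (E : V -> V -> Prop) u w : phiw E u = phiw E w ->
  forall p q, ~ E p q -> proj p q u = proj p q w.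
Proof.
  intros H p q Hpq.
  assert (H1 := f_equal (fun f => pf f (p, q, exist (fun w => reduced w) [] I)) H).
  cbv beta in H1. pose proof (eq_trans (eq_sym (@eval_phiw V E p q u Hpq)) (eq_trans H1 (@eval_phiw V E p q w Hpq))) as H2.
  clear H1; rename H2 into H1.
  apply (f_equal (fun o => proj1_sig (snd o))) in H1. simpl in H1.
  apply (f_equal (map snd)) in H1. rewrite !map_map in H1. simpl in H1.
  rewrite !map_id in H1. exact H1.
Qed.

Lemma split_first V (a : V) w : In a w -> exists w1 w2, w = w1 ++ a :: w2 /\ ~ In a w1.
Proof.
  induction w as [|x w IH]; simpl; [tauto|].
  intro H. destruct (classic (x = a)) as [->|n].
  - exists [], w. simpl; auto.
  - destruct H as [H|H]; [contradiction|].
    destruct (IH H) as [w1 [w2 [-> Hn]]].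
    exists (x :: w1), w2. simpl. split; [reflexivity|]. intros [h|h]; auto.
Qed.

Lemma projection_lemma V (E : V -> V -> Prop) (Esym : forall u v, E u v -> E v u)
  (Eirr : forall v, ~ E v v) u : forall w,
  (forall p q, ~ E p q -> proj p q u = proj p q w) -> gequiv E u w.
Proof.
  induction u as [|a u IH]; intros w H.
  - destruct w as [|c w]; [apply rst_refl|].
    exfalso. specialize (H c c (Eirr c)). rewrite proj_cons in H.
    destruct dec as [h|h]; [discriminate H| tauto].
  - assert (Ha : In a w).
    { assert (H1 := H a a (Eirr a)). rewrite proj_cons in H1.
      destruct dec as [h|h]; [|tauto].
      assert (In a (proj a a w)) by (rewrite <- H1; simpl; auto).
      apply proj_In in H0. tauto. }
    destruct (@split_first V a w Ha) as [w1 [w2 [-> Hn]]].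
    assert (Hc : forall c, In c w1 -> E a c).
    { intros c Hc. apply NNPP. intro Nac.
      assert (H1 := H a c Nac). rewrite proj_cons, proj_app in H1.
      destruct dec as [_|h]; [|tauto].
      assert (Hin : In c (proj a c w1)) by (apply proj_In; auto).
      destruct (proj a c w1) as [|h t] eqn:Eq; [destruct Hin|].
      simpl in H1. injection H1 as Hah _. subst h.
      assert (In a (proj a c w1)) by (rewrite Eq; simpl; auto).
      apply proj_In in H0. tauto. }
    eapply rst_trans; [|apply rst_sym; apply gequiv_move; auto].
    apply gequiv_cons. apply IH. intros p q Hpq.
    specialize (H p q Hpq). rewrite proj_app, !proj_cons in H. rewrite proj_app.
    destruct (dec (a = p \/ a = q)) as [h|h].
    + assert (Z : proj p q w1 = []).
      { apply proj_nil. intros c Hc' Hcp. assert (E a c) by auto.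
        destruct h as [-> | ->]; destruct Hcp as [-> | ->];
        first [exact (Hn Hc') | exact (Hpq H0) | exact (Hpq (Esym _ _ H0))]. }
      rewrite Z in *. simpl in H. injection H as H. exact H.
    + exact H.
Qed.

Definition rep V (E : V -> V -> Prop) (x : GM E) : list V :=
  proj1_sig (constructive_indefinite_description _ (proj2_sig x)).

Lemma rep_spec V (E : V -> V -> Prop) (x : GM E) : proj1_sig x = gequiv E (rep x).
Proof. unfold rep. destruct constructive_indefinite_description; simpl; auto. Qed.

Definition phi V (E : V -> V -> Prop) (x : GM E) : perm (Om V) := phiw E (rep x).

Lemma phi_of V (E : V -> V -> Prop) (Esym : forall u v, E u v -> E v u)
  (Eirr : forall v, ~ E v v) (x : GM E) u : proj1_sig x = gequiv E u -> phi x = phiw E u.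
Proof.
  intro H. unfold phi. apply phiw_resp; auto.
  assert (H0 : gequiv E (rep x) = gequiv E u) by (rewrite <- rep_spec; auto).
  rewrite H0. apply rst_refl.
Qed.

Lemma phi_inj V (E : V -> V -> Prop) (Esym : forall u v, E u v -> E v u)
  (Eirr : forall v, ~ E v v) (x y : GM E) : phi x = phi y -> x = y.
Proof.
  intro H. unfold phi in H.
  assert (G : gequiv E (rep x) (rep y)).
  { apply projection_lemma; auto. apply phiw_proj. exact H. }
  apply sig_ext. rewrite !rep_spec.
  apply functional_extensionality; intro z; apply propositional_extensionality; split; intro K.
  - eapply rst_trans; [apply rst_sym; exact G| exact K].
  - eapply rst_trans; [exact G| exact K].
Qed.

Definition Pc V (E : V -> V -> Prop) (f : prel (GM E)) (t : perm (Om V)) : Prop :=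
  forall x y, f x y -> phi y = pmul (phi x) t.

Lemma IH_const V (E : V -> V -> Prop) (Esym : forall u v, E u v -> E v u)
  (Eirr : forall v, ~ E v v) (f : prel (GM E)) : inIH f -> exists t : perm (Om V), Pc f t.
Proof.
  induction 1 as [a| |f _ [t Ht]|f g _ [tf Hf] _ [tg Hg]].
  - exists (phi a). intros x y [u [v [Hx [Ha Hy]]]].
    rewrite (@phi_of V E Esym Eirr _ _ Hx), (@phi_of V E Esym Eirr _ _ Ha), (@phi_of V E Esym Eirr _ _ Hy).
    apply phiw_app.
  - exists (pone _). intros x y H. unfold pid in H; subst. apply perm_ext; reflexivity.
  - exists (pinvp t). intros x y H. unfold pinv in H. rewrite (Ht _ _ H).
    apply perm_ext; intro z; simpl. rewrite pfg. reflexivity.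
  - exists (pmul tf tg). intros x z [y [H1 H2]]. rewrite (Hg _ _ H2), (Hf _ _ H1).
    apply perm_ext; reflexivity.
Qed.

Definition theta V (E : V -> V -> Prop) (f : prel (GM E)) : option (perm (Om V)) :=
  match dec (pempty f) with
  | left _ => None
  | right _ =>
    match dec (exists t : perm (Om V), Pc f t) with
    | left H => Some (proj1_sig (constructive_indefinite_description _ H))
    | right _ => None
    end
  end.

Lemma theta_spec V (E : V -> V -> Prop) (Esym : forall u v, E u v -> E v u)
  (Eirr : forall v, ~ E v v) (f : prel (GM E)) : inIH f -> ~ pempty f ->
  exists t, theta f = Some t /\ Pc f t.
Proof.
  intros Hf Hne. unfold theta.
  destruct (dec (pempty f)) as [h|_]; [contradiction|].
  destruct (dec (exists t : perm (Om V), Pc f t)) as [H|H].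
  - destruct constructive_indefinite_description as [t Ht]; simpl. eauto.
  - exfalso. apply H. apply IH_const; auto.
Qed.

Lemma nonempty_ex X (f : prel X) : ~ pempty f -> exists x y, f x y.
Proof.
  intro H. apply NNPP. intro N. apply H. intros x y Hxy. apply N. eauto.
Qed.

Theorem corollary3p4 (V : Type) (E : V -> V -> Prop)
  (Esym : forall u v, E u v -> E v u) (Eirr : forall v, ~ E v v) :
  strongly_Estar_unitary (@inIH0 V E).
Proof.
  exists (perm (Om V)), (permG (Om V)), (@theta V E).
  split; [|split].
  - intros a Sa. split.
    + intro H. apply NNPP. intro N. destruct Sa as [Sa|Sa]; [|contradiction].
      destruct (@theta_spec V E Esym Eirr _ Sa N) as [t [Ht _]]. congruence.
    + intro H. unfold theta. destruct dec; [reflexivity|contradiction].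
  - intros a Sa. split.
    + intro H. assert (Ne : ~ pempty a).
      { intro Em. unfold theta in H. destruct dec in H; [discriminate|contradiction]. }
      destruct Sa as [Sa|Sa]; [|contradiction].
      destruct (@theta_spec V E Esym Eirr _ Sa Ne) as [t [Ht Pt]].
      rewrite H in Ht. injection Ht as <-. simpl in Pt.
      assert (Id : forall x y, a x y -> x = y).
      { intros x y Hxy. apply (@phi_inj V E Esym Eirr _ _). rewrite (Pt _ _ Hxy).
        apply perm_ext; reflexivity. }
      split; [exact Ne|]. intros x y. split.
      * intros [z [H1 H2]]. rewrite <- (Id _ _ H1) in H2. exact H2.
      * intro Hxy. exists x. split; [|exact Hxy]. rewrite <- (Id _ _ Hxy) in Hxy. exact Hxy.
    + intros [Ne Hid]. destruct Sa as [Sa|Sa]; [|contradiction].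
      destruct (@theta_spec V E Esym Eirr _ Sa Ne) as [t [Ht Pt]]. rewrite Ht. f_equal.
      destruct (nonempty_ex Ne) as [x [y Hxy]].
      apply Hid in Hxy. destruct Hxy as [z [H1 H2]].
      assert (K := Hid x y). destruct K as [K _].
      assert (Hxy : a x y) by (apply K; exists z; auto).
      assert (e1 := Pt _ _ Hxy). rewrite (Pt _ _ H2), (Pt _ _ H1) in e1.
      simpl. apply (@pmul_cancel _ (pmul (phi x) t)).
      rewrite e1. apply perm_ext; reflexivity.
  - intros a b Sa Sb Ne.
    destruct (nonempty_ex Ne) as [x [z [y [H1 H2]]]].
    assert (Na : ~ pempty a) by (intro Em; apply (Em x y); auto).
    assert (Nb : ~ pempty b) by (intro Em; apply (Em y z); auto).
    destruct Sa as [Sa|Sa]; [|contradiction].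
    destruct Sb as [Sb|Sb]; [|contradiction].
    destruct (@theta_spec V E Esym Eirr _ Sa Na) as [ta [Ha Pa]].
    destruct (@theta_spec V E Esym Eirr _ Sb Nb) as [tb [Hb Pb]].
    destruct (@theta_spec V E Esym Eirr _ (ih_comp Sa Sb) Ne) as [tab [Hab Pab]].
    rewrite Ha, Hb, Hab. simpl. f_equal.
    assert (e := Pab x z (ex_intro _ y (conj H1 H2))).
    rewrite (Pb _ _ H2), (Pa _ _ H1) in e.
    apply (@pmul_cancel _ (phi x)). rewrite <- e. apply perm_ext; reflexivity.
Qed.
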